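(* Let $\mu$ be the Cauchy distribution $d\mu(x)=\frac1\pi\frac{dx}{1+x^2}$, $\alpha\ge0$, $\beta>0$, $s=\alpha+\beta$. For $u_0\in\mathbb R$ let $u=f_{\alpha,\beta}(u_0)$ and $v=v_s(u_0)$. Then, regarding $u_0$ (and hence $v$) as a function of $u$, \[\frac{d}{du}\int\frac{(u_0-x)\,d\mu(x)}{(u_0-x)^2+v^2}=\frac{v(-s+2v(1+v)^2)}{(1+v)(s^2+4\alpha v^2(1+v))-(\alpha-\beta)sv}.\]
   Context: $v_s(u)=\inf\{v>0:\int\frac{d\mu(x)}{(u-x)^2+v^2}\le\frac1s\}$; $f_{\alpha,\beta}(u_0)=u_0+(\alpha-\beta)\int\frac{(u_0-x)\,d\mu(x)}{(u_0-x)^2+v_s(u_0)^2}$, a strictly increasing homeomorphism of $\mathbb R$. *)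

(* Defs.v *)
From Stdlib Require Import Reals.
From Coquelicot Require Import Coquelicot.
Open Scope R_scope.

Definition cauchy_density (x : R) : R := / (PI * (1 + x ^ 2)).

Definition mu_int (g : R -> R) : R :=
  RInt_gen (fun x => g x * cauchy_density x)
           (Rbar_locally m_infty) (Rbar_locally p_infty).

Definition v_s (s u : R) : R :=
  real (Glb_Rbar (fun v => 0 < v /\
          mu_int (fun x => / ((u - x) ^ 2 + v ^ 2)) <= / s)).

Definition G_int (u0 v : R) : R :=
  mu_int (fun x => (u0 - x) / ((u0 - x) ^ 2 + v ^ 2)).

Definition f_ab (alpha beta u0 : R) : R :=
  u0 + (alpha - beta) * G_int u0 (v_s (alpha + beta) u0).

(* Main.v *)
Require Import Defs.
From Stdlib Require Import Reals.
From Coquelicot Require Import Coquelicot.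
Open Scope R_scope.
From Stdlib Require Import Lra Lia.

Lemma lim_p (F g : R -> R) (M : R) :
  (forall x, M < x -> F x = g (/x)) -> continuous g 0 ->
  filterlim F (Rbar_locally p_infty) (locally (g 0)).
Proof.
intros H Hg.
assert (Hi : is_lim (fun y => / y) p_infty 0).
{ replace (Finite 0) with (Rbar_inv p_infty) by reflexivity.
  apply is_lim_inv. apply is_lim_id. discriminate. }
apply filterlim_ext_loc with (fun x => g (/ x)).
- exists M. intros x Hx. symmetry. now apply H.
- eapply filterlim_comp. apply Hi. apply Hg.
Qed.

Lemma lim_m (F g : R -> R) (M : R) :
  (forall x, x < M -> F x = g (/x)) -> continuous g 0 ->
  filterlim F (Rbar_locally m_infty) (locally (g 0)).
Proof.
intros H Hg.
assert (Hi : is_lim (fun y => / y) m_infty 0).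
{ replace (Finite 0) with (Rbar_inv m_infty) by reflexivity.
  apply is_lim_inv. apply is_lim_id. discriminate. }
apply filterlim_ext_loc with (fun x => g (/ x)).
- exists M. intros x Hx. symmetry. now apply H.
- eapply filterlim_comp. apply Hi. apply Hg.
Qed.
Definition Fanti (u v A B D E F0 : R) (x : R) : R :=
  A / 2 * ln ((1 + x^2) / ((x - u)^2 + v^2)) + B * atan x
  + (D - A * u) / v * atan ((x - u) / v) - E / (2 * (1 + x^2))
  + F0 / 2 * (x / (1 + x^2) + atan x).

Definition hint (u v A B D E F0 : R) (x : R) : R :=
  (A*x+B)/(1+x^2) + (-A*x+D)/((x-u)^2+v^2) + (E*x+F0)/(1+x^2)^2.

Lemma pos_q x : 0 < 1 + x^2.
Proof. pose proof (pow2_ge_0 x); lra. Qed.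
Lemma pos_p u v x : 0 < v -> 0 < (x-u)^2 + v^2.
Proof. intros; pose proof (pow2_ge_0 (x-u)); pose proof (pow2_gt_0 v); nra. Qed.

Lemma Fanti_deriv u v A B D E F0 x : 0 < v ->
  is_derive (Fanti u v A B D E F0) x (hint u v A B D E F0 x).
Proof.
intros hv. unfold Fanti, hint.
assert (hq := pos_q x). assert (hp := pos_p u v x hv).
auto_derive.
- repeat split; try lra. apply Rdiv_lt_0_compat; lra.
- field. repeat split; try lra.
Qed.

Definition gp (u v A B D E F0 : R) (t : R) : R :=
  A / 2 * ln ((t^2+1)/((1-u*t)^2+v^2*t^2)) + B * (PI/2 - atan t)
  + (D - A * u) / v * (PI/2 - atan (v*t/(1-u*t))) - E / 2 * (t^2/(t^2+1))
  + F0 / 2 * (t/(t^2+1) + (PI/2 - atan t)).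

Definition gm (u v A B D E F0 : R) (t : R) : R :=
  A / 2 * ln ((t^2+1)/((1-u*t)^2+v^2*t^2)) + B * (-(PI/2) - atan t)
  + (D - A * u) / v * (-(PI/2) - atan (v*t/(1-u*t))) - E / 2 * (t^2/(t^2+1))
  + F0 / 2 * (t/(t^2+1) + (-(PI/2) - atan t)).

Lemma atan_big x : 0 < x -> atan x = PI/2 - atan (/x).
Proof. intros; rewrite atan_inv; lra. Qed.
Lemma atan_small x : x < 0 -> atan x = -(PI/2) - atan (/x).
Proof. intros. assert (H1 : atan (/ (-x)) = PI/2 - atan (-x)) by (apply atan_inv; lra).
 replace (/ (-x)) with (-/x) in H1 by (field; lra). rewrite !atan_opp in H1. lra. Qed.

Ltac neq0 := let H := fresh in intro H; ring_simplify in H; lra.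
Ltac zero_side := repeat split;
  try neq0;
  try (match goal with |- 0 < ?e => replace e with 1 by (field; neq0); lra end).

Lemma Fanti_p u v A B D E F0 : 0 < v ->
  filterlim (Fanti u v A B D E F0) (Rbar_locally p_infty)
    (locally (gp u v A B D E F0 0)).
Proof.
intros hv. refine (lim_p _ (gp u v A B D E F0) (Rabs u + 1) _ _).
- intros x Hx.
  assert (hx : 0 < x) by (pose proof (Rabs_pos u); lra).
  assert (hxu : 0 < x - u) by (pose proof (Rle_abs u); lra).
  assert (hq := pos_q x). assert (hp := pos_p u v x hv).
  assert (hxi : 0 < / x) by (apply Rinv_0_lt_compat; lra).
  assert (hd : 0 < (1 - u * / x)^2 + v^2 * (/x)^2).
  { pose proof (pow2_ge_0 (1 - u * / x)). pose proof (pow2_gt_0 v).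
    assert (0 < (/x)^2) by (apply pow_lt; lra). nra. }
  assert (h1 : (1 + x^2) / ((x - u)^2 + v^2) = ((/x)^2+1)/((1-u*/x)^2+v^2*(/x)^2)).
  { field. split; lra. }
  assert (h3 : atan ((x-u)/v) = PI/2 - atan (v*/x/(1-u*/x))).
  { rewrite (atan_big ((x-u)/v)) by (apply Rdiv_lt_0_compat; lra). f_equal. f_equal. field.
    repeat split; lra. }
  assert (h4 : E/(2*(1+x^2)) = E/2*((/x)^2/((/x)^2+1))) by (field; lra).
  assert (h5 : x/(1+x^2) = /x/((/x)^2+1)) by (field; lra).
  unfold Fanti, gp. rewrite h1, h3, h4, h5, (atan_big x hx). ring.
- apply (@ex_derive_continuous R_AbsRing R_NormedModule). unfold gp. auto_derive. zero_side.
Qed.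

Lemma Fanti_m u v A B D E F0 : 0 < v ->
  filterlim (Fanti u v A B D E F0) (Rbar_locally m_infty)
    (locally (gm u v A B D E F0 0)).
Proof.
intros hv. refine (lim_m _ (gm u v A B D E F0) (- Rabs u - 1) _ _).
- intros x Hx.
  assert (hx : x < 0) by (pose proof (Rabs_pos u); lra).
  assert (hxu : x - u < 0) by (pose proof (Rle_abs (-u)); rewrite Rabs_Ropp in *; lra).
  assert (hq := pos_q x). assert (hp := pos_p u v x hv).
  assert (hxi : / x < 0) by (apply Rinv_lt_0_compat; lra).
  assert (hd : 0 < (1 - u * / x)^2 + v^2 * (/x)^2).
  { pose proof (pow2_ge_0 (1 - u * / x)). pose proof (pow2_gt_0 v).
    assert (0 < (/x)^2) by (pose proof (pow2_gt_0 (/x)); lra). nra. }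
  assert (h1 : (1 + x^2) / ((x - u)^2 + v^2) = ((/x)^2+1)/((1-u*/x)^2+v^2*(/x)^2)).
  { field. split; lra. }
  assert (h3 : atan ((x-u)/v) = -(PI/2) - atan (v*/x/(1-u*/x))).
  { rewrite (atan_small ((x-u)/v)). f_equal. f_equal. field.
    repeat split; lra. 
    unfold Rdiv. apply Rmult_neg_pos; [lra| apply Rinv_0_lt_compat; lra]. }
  assert (h4 : E/(2*(1+x^2)) = E/2*((/x)^2/((/x)^2+1))) by (field; lra).
  assert (h5 : x/(1+x^2) = /x/((/x)^2+1)) by (field; lra).
  unfold Fanti, gm. rewrite h1, h3, h4, h5, (atan_small x hx). ring.
- apply (@ex_derive_continuous R_AbsRing R_NormedModule). unfold gm. auto_derive. zero_side.
Qed.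

Lemma gpm_val u v A B D E F0 : 0 < v ->
  gp u v A B D E F0 0 - gm u v A B D E F0 0 = PI*(B + (D - A*u)/v) + F0*PI/2.
Proof.
intros hv. unfold gp, gm. replace (v*0/(1-u*0)) with 0 by (field; neq0).
rewrite atan_0. field. lra.
Qed.

Lemma int_hint u v A B D E F0 : 0 < v ->
  is_RInt_gen (hint u v A B D E F0) (Rbar_locally m_infty) (Rbar_locally p_infty)
    (PI*(B + (D - A*u)/v) + F0*PI/2).
Proof.
intros hv. rewrite <- (gpm_val u v A B D E F0 hv).
apply is_RInt_gen_ext with (Derive (Fanti u v A B D E F0)).
- apply filter_forall. intros ab x _. apply is_derive_unique, Fanti_deriv, hv.
- apply is_RInt_gen_Derive.
  + apply filter_forall. intros ab x _. eexists. apply Fanti_deriv, hv.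
  + apply filter_forall. intros ab x _.
    apply continuous_ext with (hint u v A B D E F0).
    { intros y. symmetry. apply is_derive_unique, Fanti_deriv, hv. }
    apply (@ex_derive_continuous R_AbsRing R_NormedModule). unfold hint.
    assert (hq := pos_q x). assert (hp := pos_p u v x hv).
    simpl in hq, hp. auto_derive. repeat split; try lra. intro H; nra.
  + apply Fanti_m, hv.
  + apply Fanti_p, hv.
Qed.

Lemma delta_id u v : (u^2+v^2-1)^2 + 4*u^2 = (u^2+(1+v)^2)*(u^2+(1-v)^2).
Proof. ring. Qed.

Lemma mu_int_gen (g : R -> R) u v A B D E F0 : 0 < v ->
  (forall x, g x * cauchy_density x = / PI * hint u v A B D E F0 x) ->
  mu_int g = / PI * (PI*(B + (D - A*u)/v) + F0*PI/2).
Proof.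
intros hv Hg. unfold mu_int. 
apply (is_RInt_gen_unique (Fa := Rbar_locally m_infty) (Fb := Rbar_locally p_infty)).
apply (is_RInt_gen_ext (Fa := Rbar_locally m_infty) (Fb := Rbar_locally p_infty) (fun x => scal (/PI) (hint u v A B D E F0 x))).
- apply filter_forall. intros ab x _. rewrite Hg. change (scal (/PI) (hint u v A B D E F0 x)) with (/PI * hint u v A B D E F0 x). reflexivity.
- pose proof (is_RInt_gen_scal (Fa := Rbar_locally m_infty) (Fb := Rbar_locally p_infty) (hint u v A B D E F0) (/PI) _ (int_hint u v A B D E F0 hv)) as H.
  exact H.
Qed.

Lemma sq0 x : x^2 = 0 -> x = 0.
Proof. intros H. simpl in H. destruct (Rmult_integral x (x*1) H); lra. Qed.

Lemma mu_int1 u v : 0 < v ->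
  mu_int (fun x => / ((u - x)^2 + v^2)) = (1+v)/(v*(u^2+(1+v)^2)).
Proof.
intros hv. assert (hPI := PI_RGT_0).
assert (h1 : 0 < u^2 + (1+v)^2).
{ pose proof (pow2_ge_0 u). assert (0 < (1+v)^2) by (apply pow_lt; lra). lra. }
destruct (Req_dec ((u^2+v^2-1)^2 + 4*u^2) 0) as [Hd|Hd].
- assert (hu2 : u^2 = 0) by (pose proof (pow2_ge_0 (u^2+v^2-1)); pose proof (pow2_ge_0 u); lra).
  assert (hu : u = 0) by (apply sq0; exact hu2).
  subst u. assert (hv2 : (0^2+v^2-1)^2 = 0) by lra.
  apply sq0 in hv2.
  assert (hv1 : v = 1).
  { assert ((v-1)*(v+1) = 0) by (rewrite <- hv2; ring).
    destruct (Rmult_integral _ _ H); lra. }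
  subst v.
  rewrite (mu_int_gen _ 0 1 0 0 0 0 1) by (try lra; intros x; unfold hint, cauchy_density;
     assert (hq := pos_q x); field; split; lra).
  field. lra.
- set (w := u^2+v^2).
  rewrite (mu_int_gen _ u v (2*u/((w-1)^2+4*u^2)) ((w-1)/((w-1)^2+4*u^2))
     ((4*u^2-(w-1))/((w-1)^2+4*u^2)) 0 0).
  + assert (h2 : u^2+(1-v)^2 <> 0) by (intro H; apply Hd; rewrite delta_id, H; ring).
    unfold w. rewrite delta_id. field. repeat split; lra.
  + exact hv.
  + intros x. unfold hint, cauchy_density, w. assert (hq := pos_q x). assert (hp := pos_p u v x hv).
    field. repeat split; lra.
Qed.

Lemma G_int_val u v : 0 < v -> G_int u v = u/(u^2+(1+v)^2).
Proof.
intros hv. unfold G_int. assert (hPI := PI_RGT_0).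
assert (h1 : 0 < u^2 + (1+v)^2).
{ pose proof (pow2_ge_0 u). assert (0 < (1+v)^2) by (apply pow_lt; lra). lra. }
destruct (Req_dec ((u^2+v^2-1)^2 + 4*u^2) 0) as [Hd|Hd].
- assert (hu2 : u^2 = 0) by (pose proof (pow2_ge_0 (u^2+v^2-1)); pose proof (pow2_ge_0 u); lra).
  assert (hu : u = 0) by (apply sq0; exact hu2).
  subst u. assert (hv2 : (0^2+v^2-1)^2 = 0) by lra.
  apply sq0 in hv2.
  assert (hv1 : v = 1).
  { assert ((v-1)*(v+1) = 0) by (rewrite <- hv2; ring).
    destruct (Rmult_integral _ _ H); lra. }
  subst v.
  rewrite (mu_int_gen _ 0 1 0 0 0 (-1) 0) by (try lra; intros x; unfold hint, cauchy_density;
     assert (hq := pos_q x); field; split; lra).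
  field. lra.
- set (w := u^2+v^2).
  rewrite (mu_int_gen _ u v ((u^2-v^2+1)/((w-1)^2+4*u^2)) (u*(w+1)/((w-1)^2+4*u^2))
     (u*(u^2-3*v^2+1)/((w-1)^2+4*u^2)) 0 0).
  + assert (h2 : u^2+(1-v)^2 <> 0) by (intro H; apply Hd; rewrite delta_id, H; ring).
    unfold w. rewrite delta_id. field. repeat split; lra.
  + exact hv.
  + intros x. unfold hint, cauchy_density, w. assert (hq := pos_q x). assert (hp := pos_p u v x hv).
    field. repeat split; lra.
Qed.

Definition Fc (s u v : R) := v * (u^2 + (1+v)^2) - s * (1+v).

Lemma Fc_fact s u r v : 0 < r -> Fc s u r = 0 ->
  Fc s u v = (v - r) * (v * (v + r + 2) + s / r).
Proof.
intros hr H. unfold Fc in *.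
assert (hu : u^2 = s*(1+r)/r - (1+r)^2).
{ apply (Rmult_eq_reg_l r); [|lra]. field_simplify; [|lra]. lra. }
rewrite hu. field. lra.
Qed.

Lemma cont_of_deriv (f : R -> R) : (forall x, ex_derive f x) -> continuity f.
Proof.
intros H x. apply continuity_pt_filterlim.
apply (@ex_derive_continuous R_AbsRing R_NormedModule). apply H.
Qed.

Lemma Fc_root s u : 0 < s -> { r | 0 < r /\ Fc s u r = 0 }.
Proof.
intros hs.
destruct (IVT (Fc s u) 0 s) as [r [Hr1 Hr2]].
- apply cont_of_deriv. intros x. unfold Fc. auto_derive. auto.
- exact hs.
- unfold Fc. lra.
- unfold Fc. pose proof (pow2_ge_0 u). nra.
- exists r. split; [|exact Hr2].
  destruct (Req_dec r 0) as [->|]; [|lra]. unfold Fc in Hr2. lra.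
Qed.

Lemma vs_spec s u : 0 < s -> 0 < v_s s u /\ Fc s u (v_s s u) = 0.
Proof.
intros hs. destruct (Fc_root s u hs) as [r [hr Hr]].
assert (Hv : v_s s u = r).
{ unfold v_s.
  assert (HE : forall v, (0 < v /\ mu_int (fun x => / ((u - x) ^ 2 + v ^ 2)) <= / s) <-> (0 < v /\ r <= v)).
  { intros v. split.
    - intros [hv Hm]. split; [exact hv|]. rewrite mu_int1 in Hm by exact hv.
      assert (hD : 0 < u^2 + (1+v)^2).
      { pose proof (pow2_ge_0 u). assert (0 < (1+v)^2) by (apply pow_lt; lra). lra. }
      assert (HF : 0 <= Fc s u v).
      { unfold Fc. 
        apply Rmult_le_compat_l with (r := s * (v * (u ^ 2 + (1 + v) ^ 2))) in Hm.
        2: { apply Rmult_le_pos; [lra|]. apply Rmult_le_pos; lra. }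
        replace (s * (v * (u ^ 2 + (1 + v) ^ 2)) * ((1 + v) / (v * (u ^ 2 + (1 + v) ^ 2)))) with (s * (1+v)) in Hm by (field; lra).
        replace (s * (v * (u ^ 2 + (1 + v) ^ 2)) * / s) with (v * (u ^ 2 + (1 + v) ^ 2)) in Hm by (field; lra).
        lra. }
      rewrite (Fc_fact s u r v hr Hr) in HF.
      destruct (Rle_lt_dec r v) as [|Hlt]; [auto|].
      assert (0 < v * (v + r + 2) + s / r).
      { assert (0 < s / r) by (apply Rdiv_lt_0_compat; lra). nra. }
      nra.
    - intros [hv Hrv]. split; [exact hv|]. rewrite mu_int1 by exact hv.
      assert (hD : 0 < u^2 + (1+v)^2).
      { pose proof (pow2_ge_0 u). assert (0 < (1+v)^2) by (apply pow_lt; lra). lra. }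
      assert (HF : 0 <= Fc s u v).
      { rewrite (Fc_fact s u r v hr Hr).
        assert (0 < v * (v + r + 2) + s / r).
        { assert (0 < s / r) by (apply Rdiv_lt_0_compat; lra). nra. }
        nra. }
      unfold Fc in HF.
      apply Rmult_le_reg_l with (r := s * (v * (u ^ 2 + (1 + v) ^ 2))).
      { apply Rmult_lt_0_compat; [lra|]. apply Rmult_lt_0_compat; lra. }
      replace (s * (v * (u ^ 2 + (1 + v) ^ 2)) * ((1 + v) / (v * (u ^ 2 + (1 + v) ^ 2)))) with (s * (1+v)) by (field; lra).
      replace (s * (v * (u ^ 2 + (1 + v) ^ 2)) * / s) with (v * (u ^ 2 + (1 + v) ^ 2)) by (field; lra).
      lra. }
  rewrite (Glb_Rbar_eqset _ _ HE).
  rewrite (is_glb_Rbar_unique _ (Finite r)). reflexivity.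
  split.
  - intros x [hx hrx]. simpl. exact hrx.
  - intros b Hb. apply Hb. split; lra. }
rewrite Hv. split; assumption.
Qed.

Definition qV s u0 u := - (u + u0) * v_s s u0 / (s / v_s s u + v_s s u0 * (2 + v_s s u + v_s s u0)).

Lemma V_diff s u0 u : 0 < s -> v_s s u - v_s s u0 = (u - u0) * qV s u0 u.
Proof.
intros hs. unfold qV.
destruct (vs_spec s u hs) as [hV HF]. destruct (vs_spec s u0 hs) as [hV0 HF0].
set (V := v_s s u) in *. set (V0 := v_s s u0) in *. clearbody V V0.
unfold Fc in HF, HF0.
assert (E1 : V*u^2 = s*(1+V) - V*(1+V)^2) by lra.
assert (E2 : V0*u0^2 = s*(1+V0) - V0*(1+V0)^2) by lra.
assert (Key : (V - V0) * (s + V*V0*(2+V+V0)) = -(V0*(V*u^2) - V*(V0*u0^2))) by (rewrite E1, E2; ring).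
assert (hb : 0 < s + V*V0*(2+V+V0)).
{ assert (0 < V*V0) by (apply Rmult_lt_0_compat; lra).
  assert (0 < V*V0*(2+V+V0)) by (apply Rmult_lt_0_compat; lra). lra. }
assert (hb' : 0 < s / V + V0 * (2 + V + V0)).
{ assert (0 < s / V) by (apply Rdiv_lt_0_compat; lra).
  assert (0 < V0 * (2 + V + V0)) by (apply Rmult_lt_0_compat; lra). lra. }
replace ((u - u0) * (- (u + u0) * V0 / (s / V + V0 * (2 + V + V0))))
  with (-(V0*(V*u^2) - V*(V0*u0^2)) / (s + V*V0*(2+V+V0))) by (field; lra).
rewrite <- Key. field. lra.
Qed.

Lemma qV_bound s u0 u : 0 < s -> Rabs (qV s u0 u) <= Rabs (u + u0) / 2.
Proof.
intros hs. unfold qV.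
destruct (vs_spec s u hs) as [hV _]. destruct (vs_spec s u0 hs) as [hV0 _].
set (V := v_s s u) in *. set (V0 := v_s s u0) in *. clearbody V V0.
assert (hb : 2 * V0 < s / V + V0 * (2 + V + V0)).
{ assert (0 < s / V) by (apply Rdiv_lt_0_compat; lra).
  assert (0 < V0 * (V + V0)) by (apply Rmult_lt_0_compat; lra). nra. }
unfold Rdiv. rewrite Rabs_mult, Rabs_mult, Rabs_Ropp, (Rabs_right V0) by lra.
rewrite Rabs_Rinv by lra. rewrite (Rabs_right (s * / V + V0 * (2 + V + V0))) by lra.
rewrite Rmult_assoc. apply Rmult_le_compat_l. apply Rabs_pos.
apply (Rmult_le_reg_r (s * / V + V0 * (2 + V + V0))). lra.
rewrite Rmult_assoc, Rinv_l by lra. lra.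
Qed.

Lemma V_cont s u0 : 0 < s -> continuous (v_s s) u0.
Proof.
intros hs. apply continuity_pt_filterlim.
intros eps heps.
exists (Rmin 1 (eps / (1 + 2 * Rabs u0))). split.
{ apply Rmin_pos. lra. apply Rdiv_lt_0_compat. lra. pose proof (Rabs_pos u0); lra. }
intros x [_ Hx]. simpl in *. unfold R_dist in *.
rewrite V_diff by exact hs. rewrite Rabs_mult.
pose proof (qV_bound s u0 x hs).
assert (h1 : Rabs (x - u0) < 1) by (eapply Rlt_le_trans; [exact Hx| apply Rmin_l]).
assert (h2 : Rabs (x - u0) < eps / (1 + 2 * Rabs u0)) by (eapply Rlt_le_trans; [exact Hx| apply Rmin_r]).
assert (h3 : Rabs (x + u0) <= 1 + 2 * Rabs u0).
{ replace (x + u0) with ((x - u0) + 2 * u0) by ring.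
  eapply Rle_trans. apply Rabs_triang. rewrite Rabs_mult, (Rabs_right 2) by lra. lra. }
assert (hp : 0 < 1 + 2 * Rabs u0) by (pose proof (Rabs_pos u0); lra).
assert (h4 : Rabs (x - u0) * (1 + 2 * Rabs u0) < eps).
{ apply (Rmult_lt_compat_r (1 + 2 * Rabs u0)) in h2; [|lra].
  replace (eps / (1 + 2 * Rabs u0) * (1 + 2 * Rabs u0)) with eps in h2 by (field; lra). exact h2. }
assert (Rabs (qV s u0 x) <= (1 + 2 * Rabs u0) / 2) by lra.
pose proof (Rabs_pos (x - u0)). pose proof (Rabs_pos (qV s u0 x)).
assert (Rabs (x - u0) * Rabs (qV s u0 x) <= Rabs (x - u0) * ((1 + 2 * Rabs u0) / 2)) by (apply Rmult_le_compat_l; lra).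
lra.
Qed.

Lemma cara (f q : R -> R) x0 : (forall x, f x - f x0 = (x - x0) * q x) ->
  continuous q x0 -> is_derive f x0 (q x0).
Proof.
intros H Hq. apply is_derive_Reals.
apply (proj2 (continuity_pt_filterlim q x0)) in Hq.
intros eps heps. destruct (Hq eps heps) as [alp [Ha Hb]].
exists (mkposreal alp Ha). intros h hh0 hh.
replace ((f (x0 + h) - f x0) / h) with (q (x0 + h)).
- apply Hb. split. split. exact I. lra. simpl. unfold R_dist.
  replace (x0 + h - x0) with h by ring. exact hh.
- rewrite H. field. exact hh0.
Qed.

Lemma qV_cont s u0 : 0 < s -> continuous (qV s u0) u0.
Proof.
intros hs. destruct (vs_spec s u0 hs) as [hV0 _].
apply continuous_ext with (fun u => mult (- (u + u0) * v_s s u0)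
   ((fun w => / (s / w + v_s s u0 * (2 + w + v_s s u0))) (v_s s u))).
{ intros u. unfold qV. simpl. unfold mult; simpl. reflexivity. }
apply (@continuous_mult R_UniformSpace R_AbsRing).
- apply (@ex_derive_continuous R_AbsRing R_NormedModule). auto_derive. auto.
- apply (@continuous_comp R_UniformSpace R_UniformSpace R_UniformSpace (v_s s) (fun w => / (s / w + v_s s u0 * (2 + w + v_s s u0)))). apply V_cont, hs.
  apply (@ex_derive_continuous R_AbsRing R_NormedModule). auto_derive.
  assert (0 < s / v_s s u0) by (apply Rdiv_lt_0_compat; lra).
  assert (0 < v_s s u0 * (2 + v_s s u0 + v_s s u0)) by (apply Rmult_lt_0_compat; lra).
  repeat split; try lra.
Qed.

Lemma V_deriv s u0 : 0 < s -> is_derive (v_s s) u0 (qV s u0 u0).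
Proof.
intros hs. apply cara. intros x. apply V_diff, hs. apply qV_cont, hs.
Qed.

Definition GcD s v := v*(-s+2*v*(1+v)^2)/(s*(1+v)*(s+2*v^2*(1+v))).

Lemma Gc_deriv s u : 0 < s ->
  is_derive (fun t => t/(t^2+(1+v_s s t)^2)) u (GcD s (v_s s u)).
Proof.
intros hs. assert (HV := V_deriv s u hs).
assert (H1 : is_derive (fun t => 1 + v_s s t) u (0 + qV s u u)).
{ exact (is_derive_plus _ _ _ _ _ (is_derive_const 1 u) HV). }
assert (H2 := is_derive_pow _ 2 _ _ H1).
assert (H3 := is_derive_pow _ 2 _ _ (is_derive_id u)).
assert (H4 := is_derive_plus _ _ _ _ _ H3 H2).
destruct (vs_spec s u hs) as [hV HF].
assert (hD : 0 < u^2 + (1 + v_s s u)^2).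
{ pose proof (pow2_ge_0 u). assert (0 < (1+v_s s u)^2) by (apply pow_lt; lra). lra. }
assert (H5 := is_derive_div _ _ _ _ _ (is_derive_id u) H4 (Rgt_not_eq _ _ hD)).
assert (Hval : (1 * (u^2 + (1 + v_s s u)^2) - u * (INR 2 * 1 * u ^ 1 + INR 2 * (0 + qV s u u) * (1 + v_s s u) ^ 1))
   / (u^2 + (1 + v_s s u)^2)^2 = GcD s (v_s s u)).
{ unfold qV, GcD. replace (INR 2) with 2 by (simpl; ring).
  set (v := v_s s u) in *. clearbody v. unfold Fc in HF.
  assert (hsv : s = v * (u^2 + (1+v)^2) / (1+v)).
  { apply (Rmult_eq_reg_r (1+v)); [|lra]. field_simplify; lra. }
  assert (p1 : 0 < v * (u ^ 2 + (1 + v) ^ 2)) by (apply Rmult_lt_0_compat; lra).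
  assert (p2 : 0 < 2 * v ^ 2 * (1 + v) * (1 + v)).
  { apply Rmult_lt_0_compat; [|lra]. apply Rmult_lt_0_compat; [|lra].
    apply Rmult_lt_0_compat; [lra|]. apply pow_lt; lra. }
  assert (p3 : 0 < v * (2 + v + v) * (1 + v)).
  { apply Rmult_lt_0_compat; [|lra]. apply Rmult_lt_0_compat; lra. }
  subst s. field. repeat split; lra. }
rewrite <- Hval. exact H5.
Qed.

Definition fexp a b u := u + (a - b) * (u/(u^2+(1+v_s (a+b) u)^2)).
Definition fD a b u := 1 + (a - b) * GcD (a+b) (v_s (a+b) u).

Lemma f_ab_eq a b u : 0 < a + b -> f_ab a b u = fexp a b u.
Proof. intros hs. unfold f_ab, fexp. rewrite G_int_val. reflexivity. apply vs_spec, hs. Qed.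

Lemma fexp_deriv a b u : 0 < a + b -> is_derive (fexp a b) u (fD a b u).
Proof.
intros hs. unfold fexp, fD.
exact (is_derive_plus _ _ _ _ _ (is_derive_id u) (is_derive_scal _ _ (a-b) _ (Gc_deriv (a+b) u hs))).
Qed.

Lemma fD_pos a b u : 0 <= a -> 0 < b -> 0 < fD a b u.
Proof.
intros ha hb. assert (hs : 0 < a + b) by lra. unfold fD, GcD.
set (v := v_s (a+b) u). assert (hv : 0 < v) by (apply vs_spec; lra). clearbody v. set (s := a + b) in *.
assert (p1 : 0 < s + 2 * v^2 * (1+v)).
{ assert (0 < v^2) by (apply pow_lt; lra). assert (0 < v^2 * (1+v)) by (apply Rmult_lt_0_compat; lra). lra. }
assert (p2 : 0 < s * (1+v) * (s + 2 * v^2 * (1+v))).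
{ apply Rmult_lt_0_compat; [|lra]. apply Rmult_lt_0_compat; lra. }
replace (1 + (a - b) * (v * (- s + 2 * v * (1 + v) ^ 2) / (s * (1 + v) * (s + 2 * v ^ 2 * (1 + v)))))
  with (((1 + v) * (s^2 + 4 * a * v^2 * (1 + v)) - (a - b) * s * v) / (s * (1 + v) * (s + 2 * v ^ 2 * (1 + v)))).
2: { unfold s in *. field. repeat split; lra. }
apply Rdiv_lt_0_compat; [|exact p2].
assert (q1 : 0 <= 4 * a * v^2 * (1+v)).
{ apply Rmult_le_pos; [|lra]. apply Rmult_le_pos; [lra|]. apply pow_le; lra. }
assert (q2 : 0 < s * s * (1+v)) by (apply Rmult_lt_0_compat; [apply Rmult_lt_0_compat|]; lra).
assert (q3 : (a - b) * s * v < s * s * (1 + v)).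
{ assert (a - b < s) by (unfold s; lra).
  assert ((a - b) * (s * v) <= s * (s * v) \/ True) by auto.
  assert (0 < s * v) by (apply Rmult_lt_0_compat; lra).
  assert ((a - b) * (s * v) < s * (s * v)) by (apply Rmult_lt_compat_r; lra).
  assert (s * (s * v) < s * s * (1 + v)).
  { replace (s * s * (1 + v)) with (s * (s * v) + s * s) by ring.
    assert (0 < s * s) by (apply Rmult_lt_0_compat; lra). lra. }
  replace ((a - b) * s * v) with ((a - b) * (s * v)) by ring. lra. }
assert ((1 + v) * (s ^ 2 + 4 * a * v ^ 2 * (1 + v)) >= s * s * (1 + v)).
{ replace ((1 + v) * (s ^ 2 + 4 * a * v ^ 2 * (1 + v))) with (s * s * (1 + v) + (1+v) * (4 * a * v ^ 2 * (1 + v))) by ring.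
  assert (0 <= (1+v) * (4 * a * v ^ 2 * (1 + v))) by (apply Rmult_le_pos; lra). lra. }
lra.
Qed.

Lemma fexp_incr a b : 0 <= a -> 0 < b -> forall x y, x < y -> fexp a b x < fexp a b y.
Proof.
intros ha hb x y hxy.
apply (incr_function (fexp a b) m_infty p_infty (fD a b)); auto.
- intros t _ _. apply fexp_deriv. lra.
- intros t _ _. apply fD_pos; auto.
- exact I.
- exact I.
Qed.

Lemma fexp_cont a b : 0 < a + b -> continuity (fexp a b).
Proof.
intros hs. intros x. apply continuity_pt_filterlim.
apply (@ex_derive_continuous R_AbsRing R_NormedModule). eexists. apply fexp_deriv, hs.
Qed.

Lemma fexp_close a b u : 0 < a + b -> Rabs (fexp a b u - u) <= Rabs (a - b) / 2.
Proof.
intros hs. unfold fexp.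
set (v := v_s (a+b) u). assert (hv : 0 < v) by (apply vs_spec; lra). clearbody v.
replace (u + (a - b) * (u / (u ^ 2 + (1 + v) ^ 2)) - u) with ((a - b) * (u / (u ^ 2 + (1 + v) ^ 2))) by ring.
rewrite Rabs_mult. 
assert (hD : 0 < u^2 + (1+v)^2).
{ pose proof (pow2_ge_0 u). assert (0 < (1+v)^2) by (apply pow_lt; lra). lra. }
assert (Rabs (u / (u ^ 2 + (1 + v) ^ 2)) <= / 2).
{ unfold Rdiv. rewrite Rabs_mult, Rabs_Rinv by lra. rewrite (Rabs_right (u ^ 2 + (1 + v) ^ 2)) by lra.
  apply (Rmult_le_reg_r (u ^ 2 + (1 + v) ^ 2)); [lra|].
  rewrite Rmult_assoc, Rinv_l by lra.
  assert (Rabs u * 2 <= u^2 + 1).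
  { pose proof (pow2_ge_0 (Rabs u - 1)). rewrite <- pow2_abs. nra. }
  assert (1 <= (1+v)^2) by (replace ((1+v)^2) with (1 + v*(2+v)) by ring; assert (0 < v*(2+v)) by (apply Rmult_lt_0_compat; lra); lra).
  lra. }
pose proof (Rabs_pos (a - b)).
assert (Rabs (a - b) * Rabs (u / (u ^ 2 + (1 + v) ^ 2)) <= Rabs (a-b) * / 2) by (apply Rmult_le_compat_l; lra).
lra.
Qed.

Lemma Den_pos a b v : 0 <= a -> 0 < b -> 0 < v ->
  0 < (1 + v) * ((a+b)^2 + 4 * a * v^2 * (1 + v)) - (a - b) * (a+b) * v.
Proof.
intros ha hb hv. set (s := a + b). assert (hs : 0 < s) by (unfold s; lra).
assert (q1 : 0 <= 4 * a * v^2 * (1+v)).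
{ apply Rmult_le_pos; [|lra]. apply Rmult_le_pos; [lra|]. apply pow_le; lra. }
assert (q3 : (a - b) * s * v < s * s * (1 + v)).
{ assert (a - b < s) by (unfold s; lra).
  assert (0 < s * v) by (apply Rmult_lt_0_compat; lra).
  assert ((a - b) * (s * v) < s * (s * v)) by (apply Rmult_lt_compat_r; lra).
  assert (s * (s * v) < s * s * (1 + v)).
  { replace (s * s * (1 + v)) with (s * (s * v) + s * s) by ring.
    assert (0 < s * s) by (apply Rmult_lt_0_compat; lra). lra. }
  replace ((a - b) * s * v) with ((a - b) * (s * v)) by ring. lra. }
assert ((1 + v) * (s ^ 2 + 4 * a * v ^ 2 * (1 + v)) >= s * s * (1 + v)).
{ replace ((1 + v) * (s ^ 2 + 4 * a * v ^ 2 * (1 + v))) with (s * s * (1 + v) + (1+v) * (4 * a * v ^ 2 * (1 + v))) by ring.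
  assert (0 <= (1+v) * (4 * a * v ^ 2 * (1 + v))) by (apply Rmult_le_pos; lra). lra. }
lra.
Qed.

Lemma fexp_surj a b : 0 <= a -> 0 < b -> forall y, { x | fexp a b x = y }.
Proof.
intros ha hb y. assert (hs : 0 < a + b) by lra.
set (M := Rabs (a - b) / 2 + 1).
assert (hM : 0 < M) by (unfold M; pose proof (Rabs_pos (a - b)); lra).
destruct (IVT (fun x => fexp a b x - y) (y - M) (y + M)) as [x [_ Hx]].
- apply cont_of_deriv. intros x. eexists.
  exact (is_derive_minus _ _ _ _ _ (fexp_deriv a b x hs) (is_derive_const y x)).
- lra.
- pose proof (fexp_close a b (y - M) hs). apply Rabs_le_between in H. unfold M in *. lra.
- pose proof (fexp_close a b (y + M) hs). apply Rabs_le_between in H. unfold M in *. lra.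
- exists x. lra.
Qed.

Lemma fexp_le_inv a b : 0 <= a -> 0 < b -> forall x y, fexp a b x <= fexp a b y -> x <= y.
Proof.
intros ha hb x y H. destruct (Rle_lt_dec x y) as [|Hlt]; auto.
pose proof (fexp_incr a b ha hb y x Hlt). lra.
Qed.

Theorem lemma6p8 (alpha beta s u0 : R)
  (halpha : 0 <= alpha) (hbeta : 0 < beta) (hs : s = alpha + beta) :
  (exists phi : R -> R, forall u, f_ab alpha beta (phi u) = u) /\
  forall phi : R -> R, (forall u, f_ab alpha beta (phi u) = u) ->
    let v := v_s s u0 in
    is_derive (fun u => G_int (phi u) (v_s s (phi u))) (f_ab alpha beta u0)
      (v * (- s + 2 * v * (1 + v) ^ 2) /
       ((1 + v) * (s ^ 2 + 4 * alpha * v ^ 2 * (1 + v)) - (alpha - beta) * s * v)).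
Proof.
subst s. assert (hs : 0 < alpha + beta) by lra. split.
- exists (fun y => proj1_sig (fexp_surj alpha beta halpha hbeta y)).
  intros y. rewrite f_ab_eq by exact hs.
  destruct (fexp_surj alpha beta halpha hbeta y) as [x Hx]. exact Hx.
- intros phi Hphi v.
  assert (Hp : forall y, fexp alpha beta (phi y) = y).
  { intros y. rewrite <- f_ab_eq by exact hs. apply Hphi. }
  rewrite f_ab_eq by exact hs.
  set (y0 := fexp alpha beta u0).
  assert (Hpy0 : phi y0 = u0).
  { apply Rle_antisym; apply (fexp_le_inv alpha beta halpha hbeta); rewrite Hp; unfold y0; lra. }
  assert (Hmono : forall y1 y2, y1 <= y2 -> phi y1 <= phi y2).
  { intros y1 y2 H. apply (fexp_le_inv alpha beta halpha hbeta). rewrite !Hp. exact H. }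
  assert (Hcont : continuity_pt phi y0).
  { intros eps heps.
    assert (h1 : y0 < fexp alpha beta (u0 + eps)) by (apply fexp_incr; lra).
    assert (h2 : fexp alpha beta (u0 - eps) < y0) by (apply fexp_incr; lra).
    exists (Rmin (fexp alpha beta (u0 + eps) - y0) (y0 - fexp alpha beta (u0 - eps))).
    split. apply Rmin_pos; lra.
    intros y [_ Hy]. simpl in *. unfold R_dist in *. rewrite Hpy0.
    assert (Hy1 : Rabs (y - y0) < fexp alpha beta (u0 + eps) - y0) by (eapply Rlt_le_trans; [exact Hy|apply Rmin_l]).
    assert (Hy2 : Rabs (y - y0) < y0 - fexp alpha beta (u0 - eps)) by (eapply Rlt_le_trans; [exact Hy|apply Rmin_r]).
    apply Rabs_lt_between in Hy1. apply Rabs_lt_between in Hy2.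
    apply Rabs_lt_between. split.
    - assert (phi y > u0 - eps).
      { destruct (Rle_lt_dec (phi y) (u0 - eps)) as [Hle|]; [|lra].
        destruct (Rle_lt_or_eq_dec _ _ Hle) as [Hl|He].
        + pose proof (fexp_incr alpha beta halpha hbeta _ _ Hl). rewrite Hp in H. lra.
        + rewrite <- He in h2, Hy2. rewrite Hp in Hy2. lra. }
      lra.
    - assert (phi y < u0 + eps).
      { destruct (Rle_lt_dec (u0 + eps) (phi y)) as [Hle|]; [|lra].
        destruct (Rle_lt_or_eq_dec _ _ Hle) as [Hl|He].
        + pose proof (fexp_incr alpha beta halpha hbeta _ _ Hl). rewrite Hp in H. lra.
        + rewrite He in h1, Hy1. rewrite Hp in Hy1. lra. }
      lra. }
  assert (Prf : forall a, phi (y0 - 1) <= a <= phi (y0 + 1) -> derivable_pt (fexp alpha beta) a).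
  { intros a _. apply ex_derive_Reals_0. eexists. apply fexp_deriv, hs. }
  assert (Prg : phi (y0 - 1) <= phi y0 <= phi (y0 + 1)) by (split; apply Hmono; lra).
  assert (Hd := Ranalysis5.derivable_pt_lim_recip_interv (fexp alpha beta) phi (y0 - 1) (y0 + 1) y0 Prf Hcont
     ltac:(lra) ltac:(lra) Prg).
  assert (Hder : derive_pt (fexp alpha beta) (phi y0) (Prf (phi y0) Prg) = fD alpha beta u0).
  { apply derive_pt_eq_0. apply is_derive_Reals. rewrite Hpy0. apply fexp_deriv, hs. }
  rewrite Hder in Hd.
  assert (hfD := fD_pos alpha beta u0 halpha hbeta).
  specialize (Hd ltac:(intros x _; unfold comp, id; apply Hp) ltac:(lra)).
  apply is_derive_Reals in Hd.
  assert (HG : is_derive (fun t => t/(t^2+(1+v_s (alpha+beta) t)^2)) (phi y0) (GcD (alpha+beta) (v_s (alpha+beta) (phi y0))))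
    by (apply Gc_deriv, hs).
  assert (Hc := is_derive_comp _ _ _ _ _ HG Hd).
  rewrite Hpy0 in Hc.
  apply (is_derive_ext (fun t => phi t / ((phi t)^2 + (1 + v_s (alpha+beta) (phi t))^2))).
  { intros t. rewrite G_int_val. reflexivity. apply vs_spec, hs. }
  replace (v * (- (alpha + beta) + 2 * v * (1 + v) ^ 2) /
     ((1 + v) * ((alpha + beta) ^ 2 + 4 * alpha * v ^ 2 * (1 + v)) - (alpha - beta) * (alpha + beta) * v))
   with (1 / fD alpha beta u0 * GcD (alpha + beta) (v_s (alpha + beta) u0)).
  + exact Hc.
  + unfold fD. fold v. unfold GcD.
    assert (hv : 0 < v) by (apply vs_spec; lra). clearbody v.
    pose proof (Den_pos alpha beta v halpha hbeta hv).
    assert (p1 : 0 < (alpha+beta) + 2 * v^2 * (1+v)).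
    { assert (0 < v^2) by (apply pow_lt; lra). assert (0 < v^2 * (1+v)) by (apply Rmult_lt_0_compat; lra). lra. }
    field. repeat split; lra.
Qed.
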